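(* Suppose there exists a $\mathcal{KL}_{\rm gen}$-$\operatorname{Fin}(X^{\rm in})$ upper bound $(\gamma,\theta)$ for $(X^{\rm in},T,\varphi)$. Then there exists $h\in\Omega([0,1])$ such that $\nu_k\le h(e^{-k})$ for all $k\in\mathbb N$. If moreover $(\gamma,\theta)$ is useful for $\nu$, then $h$ can be chosen so that $\{k\in\mathbb N:\nu_k>h(0)\}\neq\emptyset$.
   Context: Standing data: a nonempty set $X^{\rm in}\subseteq\mathbb R^d$, a map $T:\mathbb R^d\to\mathbb R^d$ ($T^k$ its $k$-fold composition), $\varphi:\mathbb R^d\to\mathbb R$ with $\varphi(0)=0$; $\nu_k=\sup_{x\in X^{\rm in}}\varphi(T^k(x))$, assumed finite for every $k$; $G^{>}_\nu=\{k:\nu_k>\limsup_n\nu_n\}$. $\Omega([0,1])$: functions $h:\mathbb R\to\mathbb R$ whose restriction to $[0,1]$ is strictly increasing and continuous. For $f:\mathbb R^d\to\mathbb R\cup\{+\infty\}$, $\overline f=\sup_{X^{\rm in}}f$; $\operatorname{Fin}(X^{\rm in})=\{f:\overline f<+\infty\}$. $\mathcal{KL}_{\rm gen}$: functions $\gamma:\mathbb R\times\mathbb R_+\to\mathbb R$, increasing in the first variable for each fixed second variable and decreasing in the second variable for each fixed first variable (not necessarily strictly, not necessarily continuous). $(\gamma,\theta)\in\mathcal{KL}_{\rm gen}\times\operatorname{Fin}(X^{\rm in})$ is a $\mathcal{KL}_{\rm gen}$-$\operatorname{Fin}(X^{\rm in})$ upper bound if $\varphi(T^k(x))\le\gamma(\theta(x),k)$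 for all $k\in\mathbb N$, $x\in X^{\rm in}$; it is useful for $\nu$ if $\{k\in G^{>}_\nu:\inf_{t\ge0}\gamma(\overline\theta,t)<\nu_k\}\ne\emptyset$. *)

(* Defs.v *)
From HB Require Import structures.
From mathcomp Require Import all_boot all_order all_algebra.
From mathcomp Require Import all_classical all_reals all_analysis.
Set Implicit Arguments. Unset Strict Implicit. Unset Printing Implicit Defensive.
Import Order.TTheory GRing.Theory Num.Theory.
Import numFieldNormedType.Exports.
Local Open Scope classical_set_scope.
Local Open Scope ring_scope.

Section Defs.
Variables (R : realType) (d : nat).
Variables (Xin : set 'rV[R]_d) (T : 'rV[R]_d -> 'rV[R]_d) (phi : 'rV[R]_d -> R).

Definition nu (k : nat) : R := sup [set phi (iter k T x) | x in Xin].

Definition nu_finite : Prop :=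
  forall k : nat, has_ubound [set phi (iter k T x) | x in Xin].

Definition limsup_nu : \bar R := limn_esup (fun n => (nu n)%:E).

Definition Ggt : set nat := [set k | limsup_nu < (nu k)%:E]%E.

Definition fbar (f : 'rV[R]_d -> \bar R) : \bar R := ereal_sup (f @` Xin).

Definition Fin (f : 'rV[R]_d -> \bar R) : Prop := (fbar f < +oo)%E.

Definition KLgen (gamma : R -> R -> R) : Prop :=
  (forall t, 0 <= t -> forall a b, a <= b -> gamma a t <= gamma b t) /\
  (forall a s t, 0 <= s -> s <= t -> gamma a t <= gamma a s).

Definition KL_Fin_upper_bound (gamma : R -> R -> R) (theta : 'rV[R]_d -> \bar R)
  : Prop :=
  KLgen gamma /\ (forall x, theta x != -oo%E) /\ Fin theta /\
  (forall (k : nat) x, Xin x -> phi (iter k T x) <= gamma (fine (theta x)) k%:R).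

Definition useful (gamma : R -> R -> R) (theta : 'rV[R]_d -> \bar R) : Prop :=
  exists k, Ggt k /\
    (ereal_inf ((fun t : R => (gamma (fine (fbar theta)) t)%:E) @`
                 [set t : R | (0 <= t)%R]) < (nu k)%:E)%E.

End Defs.

Definition Omega01 (R : realType) (h : R -> R) : Prop :=
  (forall x y : R, 0 <= x -> x < y -> y <= 1 -> h x < h y) /\
  {within `[(0:R), 1]%classic, continuous h}.

(* Main.v *)
Require Import Defs.
From HB Require Import structures.
From mathcomp Require Import all_boot all_order all_algebra.
From mathcomp Require Import all_classical all_reals all_analysis.
From mathcomp Require Import lra.
Import Order.TTheory GRing.Theory Num.Theory.
Import numFieldNormedType.Exports.
Local Open Scope classical_set_scope.
Local Open Scope ring_scope.

Lemma lin_Omega (R : realType) (a C : R) : 0 < C -> Omega01 (fun x => a + C * x).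
Proof.
move=> C0; split.
  by move=> x y _ xy _; rewrite ltrD2l ltr_pM2l.
apply: continuous_subspaceT => x.
apply: continuousD; first exact: cvg_cst.
apply: continuousM; [exact: cvg_cst | exact: cvg_id].
Qed.

Theorem mainTheorem11 (R : realType) (d : nat) (Xin : set 'rV[R]_d)
  (T : 'rV[R]_d -> 'rV[R]_d) (phi : 'rV[R]_d -> R)
  (gamma : R -> R -> R) (theta : 'rV[R]_d -> \bar R) :
  Xin !=set0 ->
  phi 0 = 0 ->
  nu_finite Xin T phi ->
  KL_Fin_upper_bound Xin T phi gamma theta ->
  (exists h : R -> R, Omega01 h /\
     forall k : nat, nu Xin T phi k <= h (expR (- k%:R))) /\
  (useful Xin T phi gamma theta ->
   exists h : R -> R, Omega01 h /\
     (forall k : nat, nu Xin T phi k <= h (expR (- k%:R))) /\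
     exists k : nat, nu Xin T phi k > h 0).
Proof.
move=> [x0 Xx0] _ _ [[g1 g2] [thN [thF hb]]].
set c := fine (fbar Xin theta).
have key : forall k : nat, nu Xin T phi k <= gamma c k%:R.
  move=> k; apply: ge_sup; first by exists (phi (iter k T x0)), x0.
  move=> _ [x Xx <-]; apply: le_trans (hb k x Xx) _.
  apply: g1 => //.
  have hle : (theta x <= fbar Xin theta)%E by apply: ereal_sup_ubound; exists x.
  have f1 : theta x \is a fin_num.
    apply/fin_numP; split; first exact: thN x.
    by apply/eqP => e; move: thF; rewrite /Fin; move: hle; rewrite e leye_eq => /eqP ->.
  have f2 : fbar Xin theta \is a fin_num.
    apply/fin_numP; split; last by apply/eqP => e; move: thF; rewrite /Fin e.
    apply/eqP => e; move: hle; rewrite e leeNy_eq => /eqP ex.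
    by move: (thN x); rewrite ex.
  exact: fine_le.
have key2 : forall k : nat, nu Xin T phi k <= gamma c 0.
  by move=> k; apply: le_trans (key k) _; apply: g2.
have expP : forall k : nat, 0 < expR (- k%:R :> R) by move=> k; exact: expR_gt0.
split.
  exists (fun x => gamma c 0 + 1 * x); split; first exact: lin_Omega.
  move=> k; apply: le_trans (key2 k) _.
  by rewrite mul1r lerDl ltW.
move=> [k0 [_ /ereal_inf_lt [_ [t0 t00 <-] lt0]]].
rewrite lte_fin in lt0.
set a := (gamma c t0 + nu Xin T phi k0) / 2.
have ha1 : gamma c t0 < a by rewrite /a; lra.
have ha2 : a < nu Xin T phi k0 by rewrite /a; lra.
set M := gamma c 0.
set C := (`|M - a| + 1) * expR t0.
have C0 : 0 < C by rewrite /C mulr_gt0 ?expR_gt0 // ltr_pwDr // normr_ge0.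
exists (fun x => a + C * x); split; first exact: lin_Omega.
split; last by exists k0; rewrite mulr0 addr0.
move=> k; have [tk|kt] := leP t0 k%:R.
  apply: le_trans (key k) _; apply: le_trans (g2 _ _ _ t00 tk) _.
  apply: ltW; apply: lt_le_trans ha1 _.
  by rewrite lerDl ltW // mulr_gt0.
apply: le_trans (key2 k) _.
have e1 : 1 <= expR t0 * expR (- k%:R).
  rewrite -expRD; apply: le_trans (expR_ge1Dx _); rewrite lerDl; lra.
have : `|M - a| + 1 <= C * expR (- k%:R).
  rewrite /C -mulrA; rewrite -{1}(mulr1 (`|M - a| + 1)).
  by rewrite ler_pM2l // ltr_pwDr // normr_ge0.
move: (ler_norm (M - a)); rewrite -/M; lra.
Qed.
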